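(* Let $\mathbb{K}\in\{\mathbb{R},\mathbb{C},\mathbb{H},\mathbb{O}\}$, $k=\dim_\mathbb{R}\mathbb{K}$. For $\sigma\in\mathfrak{tf}(2,\mathbb{K})$ define $\rho_\sigma\in\mathrm{End}_\mathbb{R}(\mathfrak{h}_2(\mathbb{K}))$ by $\rho_\sigma(m)=\frac12(\sigma m+m\overline{\sigma}^t)$. Then: (i) the real vector space $\{\rho_\sigma:\sigma\in\mathfrak{tf}(2,\mathbb{K})\}$ is exactly the span of the infinitesimal boosts $B_j$ ($0\le j\le k$) and the infinitesimal rotations $A_{0j}$ ($1\le j\le k$) and $A_{1j}$ ($2\le j\le k$); (ii) the Lie subalgebra of $(\mathrm{End}_\mathbb{R}(\mathfrak{h}_2(\mathbb{K})),[\cdot,\cdot])$ generated by $\{\rho_\sigma:\sigma\in\mathfrak{tf}(2,\mathbb{K})\}$ is equal to $\mathfrak{so}(1,1+k)$, the Lie algebra of endomorphisms of $\mathfrak{h}_2(\mathbb{K})$ that are skew-adjoint for the Minkowski quadratic form $q$.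
   Context: $\mathbb{H}$ are the quaternions, $\mathbb{O}$ the octonions, with their standard conjugation $z\mapsto\overline z$ and norm $|z|$. $\mathfrak{h}_2(\mathbb{K})$ is the real vector space of Hermitian $2\times2$ matrices over $\mathbb{K}$, i.e. $h(t,x,z)=\frac12\begin{pmatrix}t+x&z\\\overline z&t-x\end{pmatrix}$ with $t,x\in\mathbb{R}$, $z\in\mathbb{K}$, equipped with the quadratic form $q(h(t,x,z))=t^2-x^2-|z|^2$ (signature $(1,1+k)$). $\mathfrak{tf}(2,\mathbb{K})$ is the space of $2\times2$ matrices $\sigma$ over $\mathbb{K}$ with $\sigma_{11}+\sigma_{22}=0$; matrix products are computed entrywise with the multiplication of $\mathbb{K}$. Let $(u_2,\dots,u_k)$ be an orthonormal basis of $\mathrm{Im}\,\mathbb{K}$ and $e_{-1}=\begin{pmatrix}1&0\\0&1\end{pmatrix}$, $e_0=\begin{pmatrix}1&0\\0&-1\end{pmatrix}$, $e_1=\begin{pmatrix}0&1\\1&0\end{pmatrix}$, $e_j=\begin{pmatrix}0&u_j\\-u_j&0\end{pmatrix}$ ($2\le j\le k$). $B_j$ is the endomorphism sending $e_{-1}\mapsto e_j$, $e_j\mapsto e_{-1}$ and all other basis vectors to $0$; for $0\le i<j\le k$, $A_{ij}$ sends $e_i\mapsto e_j$, $e_j\mapsto-e_i$ and all other basis vectors to $0$. *)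

(* Defs.v *)
From HB Require Import structures.
From mathcomp Require Import all_boot all_order all_algebra.
From mathcomp Require Import reals.
Set Implicit Arguments. Unset Strict Implicit. Unset Printing Implicit Defensive.
Import Order.TTheory GRing.Theory Num.Theory.
Local Open Scope ring_scope.

Section Defs.
Variable R : realType.

(* ---------- Cayley–Dickson algebras: CD 0 = R, CD 1 = C, CD 2 = H, CD 3 = O ---------- *)
Fixpoint CD (n : nat) : Type :=
  match n with 0 => (R : Type) | m.+1 => (CD m * CD m)%type end.

Fixpoint cd_zero (n : nat) : CD n :=
  match n return CD n with 0 => (0 : R) | m.+1 => (cd_zero m, cd_zero m) end.

Fixpoint cd_real (n : nat) (r : R) : CD n :=
  match n return CD n with 0 => r | m.+1 => (cd_real m r, cd_zero m) end.

Fixpoint cd_add (n : nat) : CD n -> CD n -> CD n :=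
  match n return CD n -> CD n -> CD n with
  | 0 => fun a b : R => a + b
  | m.+1 => fun x y => (cd_add x.1 y.1, cd_add x.2 y.2)
  end.

Fixpoint cd_opp (n : nat) : CD n -> CD n :=
  match n return CD n -> CD n with
  | 0 => fun a : R => - a
  | m.+1 => fun x => (cd_opp x.1, cd_opp x.2)
  end.

Fixpoint cd_scale (n : nat) (r : R) : CD n -> CD n :=
  match n return CD n -> CD n with
  | 0 => fun a : R => r * a
  | m.+1 => fun x => (cd_scale r x.1, cd_scale r x.2)
  end.

Fixpoint cd_conj (n : nat) : CD n -> CD n :=
  match n return CD n -> CD n with
  | 0 => fun a : R => a
  | m.+1 => fun x => (cd_conj x.1, cd_opp x.2)
  end.

Fixpoint cd_mul (n : nat) : CD n -> CD n -> CD n :=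
  match n return CD n -> CD n -> CD n with
  | 0 => fun a b : R => a * b
  | m.+1 => fun x y =>
      (cd_add (cd_mul x.1 y.1) (cd_opp (cd_mul (cd_conj y.2) x.2)),
       cd_add (cd_mul y.2 x.1) (cd_mul x.2 (cd_conj y.1)))
  end.

Fixpoint cd_re (n : nat) : CD n -> R :=
  match n return CD n -> R with
  | 0 => fun a : R => a
  | m.+1 => fun x => cd_re x.1
  end.

Fixpoint cd_dot (n : nat) : CD n -> CD n -> R :=
  match n return CD n -> CD n -> R with
  | 0 => fun a b : R => a * b
  | m.+1 => fun x y => cd_dot x.1 y.1 + cd_dot x.2 y.2
  end.

Definition cd_norm2 (n : nat) (z : CD n) : R := cd_dot z z.

Record mat2 (n : nat) := Mat2 { m11 : CD n; m12 : CD n; m21 : CD n; m22 : CD n }.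

Definition mat_mul (n : nat) (A B : mat2 n) : mat2 n :=
  Mat2 (cd_add (cd_mul (m11 A) (m11 B)) (cd_mul (m12 A) (m21 B)))
       (cd_add (cd_mul (m11 A) (m12 B)) (cd_mul (m12 A) (m22 B)))
       (cd_add (cd_mul (m21 A) (m11 B)) (cd_mul (m22 A) (m21 B)))
       (cd_add (cd_mul (m21 A) (m12 B)) (cd_mul (m22 A) (m22 B))).

Definition mat_add (n : nat) (A B : mat2 n) : mat2 n :=
  Mat2 (cd_add (m11 A) (m11 B)) (cd_add (m12 A) (m12 B))
       (cd_add (m21 A) (m21 B)) (cd_add (m22 A) (m22 B)).

Definition mat_scale (n : nat) (r : R) (A : mat2 n) : mat2 n :=
  Mat2 (cd_scale r (m11 A)) (cd_scale r (m12 A)) (cd_scale r (m21 A)) (cd_scale r (m22 A)).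

Definition mat_ct (n : nat) (A : mat2 n) : mat2 n :=
  Mat2 (cd_conj (m11 A)) (cd_conj (m21 A)) (cd_conj (m12 A)) (cd_conj (m22 A)).

Definition tf (n : nat) (s : mat2 n) : Prop := cd_add (m11 s) (m22 s) = @cd_zero n.

Definition h2 (n : nat) : Type := (R * R * CD n)%type.

(* h(t,x,z) = 1/2 [[t+x, z], [conj z, t-x]] *)
Definition hmat (n : nat) (p : h2 n) : mat2 n :=
  Mat2 (@cd_real n ((p.1.1 + p.1.2) / 2)) (cd_scale (1/2) p.2)
       (cd_scale (1/2) (cd_conj p.2)) (@cd_real n ((p.1.1 - p.1.2) / 2)).

(* inverse of hmat on Hermitian matrices *)
Definition hcoord (n : nat) (M : mat2 n) : h2 n :=
  (cd_re (m11 M) + cd_re (m22 M), cd_re (m11 M) - cd_re (m22 M), cd_scale 2 (m12 M)).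

Definition hadd (n : nat) (p p' : h2 n) : h2 n :=
  (p.1.1 + p'.1.1, p.1.2 + p'.1.2, cd_add p.2 p'.2).
Definition hscale (n : nat) (a : R) (p : h2 n) : h2 n :=
  (a * p.1.1, a * p.1.2, cd_scale a p.2).
Definition hopp (n : nat) (p : h2 n) : h2 n := (- p.1.1, - p.1.2, cd_opp p.2).
Definition hzero (n : nat) : h2 n := (0, 0, @cd_zero n).

Definition qform (n : nat) (p : h2 n) : R := p.1.1 ^+ 2 - p.1.2 ^+ 2 - cd_norm2 p.2.
Definition qpolar (n : nat) (p p' : h2 n) : R :=
  (qform (hadd p p') - qform p - qform p') / 2.

Definition rho (n : nat) (s : mat2 n) (p : h2 n) : h2 n :=
  hcoord (mat_scale (1/2) (mat_add (mat_mul s (hmat p)) (mat_mul (hmat p) (mat_ct s)))).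

Definition endo (n : nat) : Type := h2 n -> h2 n.

Definition rlinear (n : nat) (f : endo n) : Prop :=
  forall (a : R) (p p' : h2 n), f (hadd (hscale a p) p') = hadd (hscale a (f p)) (f p').

Definition ezero (n : nat) : endo n := fun _ => @hzero n.
Definition eadd (n : nat) (f g : endo n) : endo n := fun p => hadd (f p) (g p).
Definition escale (n : nat) (a : R) (f : endo n) : endo n := fun p => hscale a (f p).
Definition bracket (n : nat) (f g : endo n) : endo n :=
  fun p => hadd (f (g p)) (hopp (g (f p))).

Definition in_span (n : nat) (S : endo n -> Prop) (f : endo n) : Prop :=
  exists (m : nat) (c : 'I_m -> R) (g : 'I_m -> endo n),
    (forall i, S (g i)) /\
    forall p, f p = foldr (fun i acc => hadd (hscale (c i) (g i p)) acc) (@hzero n) (enum 'I_m).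

Definition lie_subalg (n : nat) (L : endo n -> Prop) : Prop :=
  (forall f, L f -> rlinear f) /\
  L (@ezero n) /\
  (forall f g, L f -> L g -> L (eadd f g)) /\
  (forall a f, L f -> L (escale a f)) /\
  (forall f g, L f -> L g -> L (bracket f g)).

Definition lie_gen (n : nat) (S : endo n -> Prop) (f : endo n) : Prop :=
  forall L, lie_subalg L -> (forall g, S g -> L g) -> L f.

Definition so_q (n : nat) (f : endo n) : Prop :=
  rlinear f /\ forall p p', qpolar (f p) p' + qpolar p (f p') = 0.

Definition rho_set (n : nat) (f : endo n) : Prop :=
  exists s : mat2 n, tf s /\ forall p, f p = rho s p.

Definition orthonormal_basis_Im (n : nat) (u : nat -> CD n) : Prop :=
  (forall j, (2 <= j <= 2 ^ n)%N -> cd_re (u j) = 0) /\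
  (forall i j, (2 <= i <= 2 ^ n)%N -> (2 <= j <= 2 ^ n)%N ->
      cd_dot (u i) (u j) = (i == j)%:R) /\
  (forall z : CD n, cd_re z = 0 -> exists c : nat -> R,
      z = foldr (fun j acc => cd_add (cd_scale (c j) (u j)) acc) (@cd_zero n)
                (iota 2 (2 ^ n).-1)).

(* index i : int, -1 <= i <= k *)
Definition ebasis (n : nat) (u : nat -> CD n) (i : int) : h2 n :=
  match i with
  | Negz _ => (2, 0, @cd_zero n)                 (* e_{-1} = [[1,0],[0,1]] *)
  | Posz 0 => (0, 2, @cd_zero n)                 (* e_0 = [[1,0],[0,-1]] *)
  | Posz 1 => (0, 0, @cd_real n 2)               (* e_1 = [[0,1],[1,0]] *)
  | Posz j => (0, 0, cd_scale 2 (u j))          (* e_j = [[0,u_j],[-u_j,0]] *)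
  end.

Definition in_range (n : nat) (i : int) : bool := (-1 <= i) && (i <= (2 ^ n)%N%:Z).

Definition isB (n : nat) (u : nat -> CD n) (j : int) (f : endo n) : Prop :=
  rlinear f /\ forall i : int, in_range n i ->
    f (ebasis u i) = if i == -1 then ebasis u j
                     else if i == j then ebasis u (-1) else @hzero n.

Definition isA (n : nat) (u : nat -> CD n) (i j : int) (f : endo n) : Prop :=
  rlinear f /\ forall l : int, in_range n l ->
    f (ebasis u l) = if l == i then ebasis u j
                     else if l == j then hopp (ebasis u i) else @hzero n.

Definition boost_rot_gens (n : nat) (u : nat -> CD n) (f : endo n) : Prop :=
  (exists j : int, 0 <= j <= (2 ^ n)%N%:Z /\ isB u j f) \/
  (exists j : int, 1 <= j <= (2 ^ n)%N%:Z /\ isA u 0 j f) \/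
  (exists j : int, 2 <= j <= (2 ^ n)%N%:Z /\ isA u 1 j f).

End Defs.

(* Main.v *)
Require Import Defs.
From HB Require Import structures.
From mathcomp Require Import all_boot all_order all_algebra.
From mathcomp Require Import reals.
From mathcomp Require Import ring lra.
From Stdlib Require Import FunctionalExtensionality.
Set Implicit Arguments. Unset Strict Implicit. Unset Printing Implicit Defensive.
Import Order.TTheory GRing.Theory Num.Theory.
Local Open Scope ring_scope.


Section CDlib.
Variable R : realType.

Lemma peq (A B : Type) (a c : A) (b d : B) : a = c -> b = d -> (a, b) = (c, d).
Proof. by move=> -> ->. Qed.

Fixpoint cdc (n : nat) : CD R n -> nat -> R :=
  match n return CD R n -> nat -> R with
  | 0 => fun x i => if i == 0%N then x else 0
  | m.+1 => fun x i => if odd i then cdc x.2 i./2 else cdc x.1 i./2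
  end.

Lemma cd_ext n (x y : CD R n) : (forall i, cdc x i = cdc y i) -> x = y.
Proof.
elim: n x y => [|n IH] x y /= H; first by have := H 0%N.
case: x y H => a b [c d] /= H; apply: peq; apply: IH => i.
  by have := H (i.*2); rewrite odd_double doubleK.
by have := H (i.*2.+1); rewrite /= odd_double /= uphalf_double.
Qed.

Lemma cdc_add n (x y : CD R n) i : cdc (cd_add x y) i = cdc x i + cdc y i.
Proof. elim: n x y i => [|n IH] x y i /=; first by case: ifP; rewrite ?addr0.
by case: ifP; rewrite IH. Qed.
Lemma cdc_opp n (x : CD R n) i : cdc (cd_opp x) i = - cdc x i.
Proof. elim: n x i => [|n IH] x i /=; first by case: ifP; rewrite ?oppr0.
by case: ifP; rewrite IH. Qed.
Lemma cdc_scale n r (x : CD R n) i : cdc (cd_scale r x) i = r * cdc x i.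
Proof. elim: n x i => [|n IH] x i /=; first by case: ifP; rewrite ?mulr0.
by case: ifP; rewrite IH. Qed.
Lemma cdc_zero n i : cdc (cd_zero R n) i = 0.
Proof. elim: n i => [|n IH] i /=; first by case: ifP. by case: ifP; rewrite IH. Qed.
Lemma cdc_real n r i : cdc (cd_real n r) i = (i == 0%N)%:R * r.
Proof.
elim: n i => [|n IH] i /=; first by case: ifP; rewrite ?mul1r ?mul0r.
case: ifP => Hi; first by rewrite cdc_zero; case: i Hi => // i _; rewrite /= mul0r.
by rewrite IH; case: i Hi => [|[|i]] //= Hi.
Qed.

Definition cdcE := (cdc_add, cdc_opp, cdc_scale, cdc_zero, cdc_real).


Lemma cd_re_cdc n (x : CD R n) : cd_re x = cdc x 0.
Proof. by elim: n x => [|n IH] x //=; rewrite IH. Qed.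

Lemma cd_dotC n (x y : CD R n) : cd_dot x y = cd_dot y x.
Proof. elim: n x y => [|n IH] x y /=; [exact: mulrC| by rewrite (IH x.1) (IH x.2)]. Qed.
Lemma cd_dotDl n (x y z : CD R n) : cd_dot (cd_add x y) z = cd_dot x z + cd_dot y z.
Proof. elim: n x y z => [|n IH] x y z /=; [exact: mulrDl| rewrite !IH; ring]. Qed.
Lemma cd_dotZl n r (x z : CD R n) : cd_dot (cd_scale r x) z = r * cd_dot x z.
Proof. elim: n x z => [|n IH] x z /=; [by rewrite mulrA| rewrite !IH; ring]. Qed.
Lemma cd_dotNl n (x z : CD R n) : cd_dot (cd_opp x) z = - cd_dot x z.
Proof. elim: n x z => [|n IH] x z /=; [exact: mulNr| rewrite !IH; ring]. Qed.
Lemma cd_dot0l n (z : CD R n) : cd_dot (cd_zero R n) z = 0.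
Proof. elim: n z => [|n IH] z /=; [exact: mul0r| rewrite !IH; ring]. Qed.
Lemma cd_dot_reall n r (z : CD R n) : cd_dot (cd_real n r) z = r * cd_re z.
Proof. elim: n z => [|n IH] z //=; rewrite IH cd_dot0l; ring. Qed.
Lemma cd_dotDr n (x y z : CD R n) : cd_dot z (cd_add x y) = cd_dot z x + cd_dot z y.
Proof. by rewrite !(cd_dotC z) cd_dotDl. Qed.
Lemma cd_dotZr n r (x z : CD R n) : cd_dot z (cd_scale r x) = r * cd_dot z x.
Proof. by rewrite !(cd_dotC z) cd_dotZl. Qed.
Lemma cd_dotNr n (x z : CD R n) : cd_dot z (cd_opp x) = - cd_dot z x.
Proof. by rewrite !(cd_dotC z) cd_dotNl. Qed.
Lemma cd_dot0r n (z : CD R n) : cd_dot z (cd_zero R n) = 0.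
Proof. by rewrite cd_dotC cd_dot0l. Qed.
Lemma cd_dot_realr n r (z : CD R n) : cd_dot z (cd_real n r) = r * cd_re z.
Proof. by rewrite cd_dotC cd_dot_reall. Qed.

Definition dotE := (cd_dotDl, cd_dotZl, cd_dotNl, cd_dot0l, cd_dot_reall,
                    cd_dotDr, cd_dotZr, cd_dotNr, cd_dot0r, cd_dot_realr).

Lemma cd_re_add n (x y : CD R n) : cd_re (cd_add x y) = cd_re x + cd_re y.
Proof. by rewrite !cd_re_cdc cdc_add. Qed.
Lemma cd_re_opp n (x : CD R n) : cd_re (cd_opp x) = - cd_re x.
Proof. by rewrite !cd_re_cdc cdc_opp. Qed.
Lemma cd_re_scale n r (x : CD R n) : cd_re (cd_scale r x) = r * cd_re x.
Proof. by rewrite !cd_re_cdc cdc_scale. Qed.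
Lemma cd_re_zero n : cd_re (cd_zero R n) = 0 :> R.
Proof. by rewrite !cd_re_cdc cdc_zero. Qed.
Lemma cd_re_real n (r : R) : cd_re (cd_real n r) = r.
Proof. by rewrite !cd_re_cdc cdc_real mul1r. Qed.
Definition reE := (cd_re_add, cd_re_opp, cd_re_scale, cd_re_zero, cd_re_real).

Lemma cd_conjK n (x : CD R n) : cd_conj (cd_conj x) = x.
Proof.
elim: n x => [|n IH] x //=; case: x => a b /=; rewrite IH; congr pair.
by apply: cd_ext => i; rewrite !cdc_opp opprK.
Qed.


Definition A1z n (y z : CD R n) : CD R n :=
  cd_add (cd_scale (cd_re z) y) (cd_opp (cd_real n (cd_dot y z))).
Definition Gf n (a : R) (w v y : CD R n) : endo R n := fun p =>
  (a * p.1.2 + cd_dot w p.2, a * p.1.1 - cd_dot v p.2,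
   cd_add (cd_scale p.1.1 w) (cd_add (cd_scale p.1.2 v) (A1z y p.2))).

End CDlib.

Ltac cdring := apply: cd_ext => ?; rewrite ?cdcE; ring.




Section Rho.
Variable R : realType.

Ltac dall := repeat match goal with
  | x : (_ * _)%type |- _ => destruct x
  | x : CD _ _ |- _ => destruct x
  end.

Lemma rho_G n (hn : (n <= 3)%N) (s b c : CD R n) (p : h2 R n) :
  rho (Mat2 s b c (cd_opp s)) p =
  Gf (cd_re s) (cd_scale (1/2) (cd_add b (cd_conj c)))
     (cd_scale (1/2) (cd_add (cd_conj c) (cd_opp b))) s p.
Proof.
case: n hn s b c p => [|[|[|[|n]]]] // _ s b c p;
rewrite /rho /Gf /A1z /hcoord /hmat /mat_scale /mat_add /mat_mul /mat_ct /=;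
dall; simpl; repeat apply: peq; by field.
Qed.
End Rho.



Section H2.
Variable R : realType.
Variable n : nat.
Implicit Types (p q : h2 R n) (f g : endo R n) (a c : R) (w v y : CD R n).

Lemma heq p q : p.1.1 = q.1.1 -> p.1.2 = q.1.2 -> p.2 = q.2 -> p = q.
Proof. by case: p q => [[? ?] ?] [[? ?] ?] /= -> -> ->. Qed.

Ltac hring3 := apply: heq => /=; [ring | ring | cdring].

Lemma qpolarE p p' : qpolar p p' = p.1.1 * p'.1.1 - p.1.2 * p'.1.2 - cd_dot p.2 p'.2.
Proof.
rewrite /qpolar /qform /cd_norm2 /hadd /= ?dotE (cd_dotC p'.2 p.2).
by field.
Qed.

Lemma qpolarZl a p p' : qpolar (hscale a p) p' = a * qpolar p p'.
Proof. rewrite !qpolarE /= ?dotE; ring. Qed.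
Lemma qpolarZr a p p' : qpolar p (hscale a p') = a * qpolar p p'.
Proof. rewrite !qpolarE /= ?dotE; ring. Qed.

Lemma rlinD f : rlinear f -> forall p p', f (hadd p p') = hadd (f p) (f p').
Proof.
move=> Hf p p'; have -> : hadd p p' = hadd (hscale 1 p) p' by hring3.
rewrite Hf; hring3.
Qed.

Lemma rlin0 f : rlinear f -> f (hzero R n) = hzero R n.
Proof.
move=> Hf; have -> : hzero R n = hadd (hscale (-1) (hzero R n)) (hzero R n) by hring3.
rewrite Hf; hring3.
Qed.

Lemma rlinZ f : rlinear f -> forall a p, f (hscale a p) = hscale a (f p).
Proof.
move=> Hf a p; have -> : hscale a p = hadd (hscale a p) (hzero R n) by hring3.
rewrite Hf rlin0 //; hring3.
Qed.

Lemma rlinN f : rlinear f -> forall p, f (hopp p) = hopp (f p).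
Proof.
move=> Hf p; have -> : hopp p = hscale (-1) p by hring3.
rewrite rlinZ //; hring3.
Qed.

Lemma so_q_lie : lie_subalg (@so_q R n).
Proof.
split; first by move=> f [].
split.
  split; first by move=> a p p'; rewrite /ezero; hring3.
  by move=> p p'; rewrite !qpolarE /ezero /hzero /= ?dotE; ring.
split.
  move=> f g [Lf Sf] [Lg Sg]; split.
    by move=> a p p'; rewrite /eadd Lf Lg; hring3.
  move=> p p'; have := Sf p p'; have := Sg p p'.
  rewrite /eadd !qpolarE /hadd /= ?dotE; lra.
split.
  move=> a f [Lf Sf]; split.
    by move=> b p p'; rewrite /escale Lf; hring3.
  by move=> p p'; rewrite /escale qpolarZl qpolarZr -mulrDr Sf mulr0.
move=> f g [Lf Sf] [Lg Sg]; split.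
  move=> a p p'; rewrite /bracket !(Lf, Lg, rlinD Lf, rlinD Lg, rlinZ Lf, rlinZ Lg).
  hring3.
move=> p p'.
have := Sf (g p) p'; have := Sg p (f p'); have := Sg (f p) p'; have := Sf p (g p').
rewrite /bracket !qpolarE /hadd /hopp /= ?dotE; lra.
Qed.


Lemma Gf_lin a w v y : rlinear (Gf a w v y).
Proof.
move=> c p p'; rewrite /Gf /A1z /hadd /hscale /=; apply: heq => /=;
rewrite ?dotE ?reE; [ring|ring|cdring].
Qed.

Lemma Gf_skew a w v y p p' :
  qpolar (Gf a w v y p) p' + qpolar p (Gf a w v y p') = 0.
Proof.
case: p p' => [[t x] z] [[t' x'] z'].
rewrite !qpolarE /Gf /A1z /= ?dotE ?reE (cd_dotC z w) (cd_dotC z v) (cd_dotC z y).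
ring.
Qed.

Lemma Gf_so a w v y : so_q (Gf a w v y).
Proof. split; [exact: Gf_lin | exact: Gf_skew]. Qed.

Lemma Gf_params c a w v y a' w' v' y' p :
  hadd (hscale c (Gf a w v y p)) (Gf a' w' v' y' p) =
  Gf (c * a + a') (cd_add (cd_scale c w) w') (cd_add (cd_scale c v) v')
     (cd_add (cd_scale c y) y') p.
Proof. rewrite /Gf /A1z /hadd /hscale /=; apply: heq => /=; rewrite ?dotE; [ring|ring|cdring]. Qed.

Lemma Gf_zero p : Gf 0 (cd_zero R n) (cd_zero R n) (cd_zero R n) p = hzero R n.
Proof. rewrite /Gf /A1z /hzero /=; apply: heq => /=; rewrite ?dotE; [ring|ring|cdring]. Qed.

Definition Gset (f : endo R n) := exists a w v y, forall p, f p = Gf a w v y p.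

Lemma so_q_ext f g : (forall p, f p = g p) -> so_q g -> so_q f.
Proof.
move=> E [L S]; split; first by move=> a p p'; rewrite !E L.
by move=> p p'; rewrite !E S.
Qed.

Lemma Gset_so f : Gset f -> so_q f.
Proof. by case=> [a [w [v [y E]]]]; apply: so_q_ext E (Gf_so _ _ _ _). Qed.

Lemma rho_Gset (hn : (n <= 3)%N) f : rho_set f <-> Gset f.
Proof.
split.
  case=> [[s b c d] [Htf E]].
  have Hd : d = cd_opp s.
    apply: cd_ext => i; move: Htf; rewrite /tf /= => /(congr1 (fun x => cdc x i)).
    rewrite cdc_add cdc_zero cdc_opp => H; lra.
  subst d.
  exists (cd_re s), (cd_scale (1/2) (cd_add b (cd_conj c))),
    (cd_scale (1/2) (cd_add (cd_conj c) (cd_opp b))), s => p.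
  by rewrite E rho_G.
case=> [a [w [v [y E]]]].
pose s := cd_add (cd_real n a) (cd_add y (cd_opp (cd_real n (cd_re y)))).
exists (Mat2 s (cd_add w (cd_opp v)) (cd_conj (cd_add w v)) (cd_opp s)); split.
  by rewrite /tf /=; cdring.
move=> p; rewrite E rho_G // cd_conjK.
have -> : cd_scale (1 / 2) (cd_add (cd_add w (cd_opp v)) (cd_add w v)) = w.
  apply: cd_ext => i; rewrite !cdcE; by field.
have -> : cd_scale (1 / 2) (cd_add (cd_add w v) (cd_opp (cd_add w (cd_opp v)))) = v.
  apply: cd_ext => i; rewrite !cdcE; by field.
rewrite /Gf /A1z /s; apply: heq => /=; rewrite ?dotE ?reE; [ring|ring|cdring].
Qed.

End H2.


Ltac hring := apply: heq => /=; [ring | ring | cdring].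

Section U.
Variable R : realType.
Variable n : nat.
Implicit Types (p q : h2 R n) (f g : endo R n) (a : R) (w v y z : CD R n) (c : nat -> R) (d : nat -> CD R n).

Definition cdlc (l : seq nat) (c : nat -> R) (d : nat -> CD R n) : CD R n :=
  foldr (fun j acc => cd_add (cd_scale (c j) (d j)) acc) (cd_zero R n) l.
Definition hlc (l : seq nat) (c : nat -> R) (e : nat -> h2 R n) : h2 R n :=
  foldr (fun j acc => hadd (hscale (c j) (e j)) acc) (hzero R n) l.

Lemma cdc_cdlc l c d i : cdc (cdlc l c d) i = \sum_(j <- l) c j * cdc (d j) i.
Proof.
elim: l => [|j l IH] /=; first by rewrite big_nil cdc_zero.
by rewrite big_cons cdc_add cdc_scale IH.
Qed.

Lemma dot_cdlc l c d z : cd_dot (cdlc l c d) z = \sum_(j <- l) c j * cd_dot (d j) z.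
Proof.
elim: l => [|j l IH] /=; first by rewrite big_nil cd_dot0l.
by rewrite big_cons cd_dotDl cd_dotZl IH.
Qed.

Lemma re_cdlc l c d : cd_re (cdlc l c d) = \sum_(j <- l) c j * cd_re (d j).
Proof. by rewrite !cd_re_cdc cdc_cdlc; apply: eq_bigr => j _; rewrite cd_re_cdc. Qed.

Lemma cdlc_eq_in l c c' d d' :
  (forall j, j \in l -> cd_scale (c j) (d j) = cd_scale (c' j) (d' j)) ->
  cdlc l c d = cdlc l c' d'.
Proof.
elim: l => [|j l IH] //= H; rewrite H ?mem_head // IH // => k Hk.
by apply: H; rewrite in_cons Hk orbT.
Qed.

Lemma hlcE l c e : hlc l c e =
  (\sum_(j <- l) c j * (e j).1.1, \sum_(j <- l) c j * (e j).1.2, cdlc l c (fun j => (e j).2)).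
Proof.
elim: l => [|j l IH] /=; first by rewrite !big_nil.
by rewrite IH !big_cons.
Qed.

Lemma rlin_hlc f l c e : rlinear f -> f (hlc l c e) = hlc l c (fun j => f (e j)).
Proof.
move=> Hf; elim: l => [|j l IH] /=; first exact: rlin0.
by rewrite Hf IH.
Qed.

Variable u : nat -> CD R n.
Variable hu : orthonormal_basis_Im u.

Definition K := (2 ^ n)%N.
Definition J := iota 2 K.-1.

Lemma K_gt0 : (0 < K)%N.
Proof. by rewrite /K expn_gt0. Qed.

Lemma memJ j : (j \in J) = (2 <= j <= K)%N.
Proof.
rewrite /J mem_iota; have := K_gt0; by case: K.
Qed.

Lemma uJ_re j : j \in J -> cd_re (u j) = 0.
Proof. by rewrite memJ => Hj; case: hu => H _; exact: H. Qed.

Lemma uJ_dot i j : i \in J -> j \in J -> cd_dot (u i) (u j) = (i == j)%:R.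
Proof. by rewrite !memJ => Hi Hj; case: hu => _ [H _]; exact: H. Qed.

Lemma sum_delta (c : nat -> R) i : i \in J ->
  \sum_(j <- J) c j * cd_dot (u j) (u i) = c i.
Proof.
move=> Hi.
rewrite (bigD1_seq i) ?iota_uniq //= uJ_dot // eqxx mulr1 big_seq_cond big1 ?addr0 //.
by move=> j /andP [Hj Hji]; rewrite uJ_dot // (negPf Hji) mulr0.
Qed.

Lemma decompIm z : cd_re z = 0 -> z = cdlc J (fun j => cd_dot z (u j)) u.
Proof.
move=> Hz; case: hu => _ [_ Hs]; case: (Hs z Hz) => c Ez.
have Ez' : z = cdlc J c u by [].
rewrite {1}Ez'; apply: cdlc_eq_in => j Hj.
by rewrite Ez' dot_cdlc sum_delta.
Qed.

Lemma decomp z : z = cd_add (cd_real n (cd_re z)) (cdlc J (fun j => cd_dot z (u j)) u).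
Proof.
pose z' := cd_add z (cd_opp (cd_real n (cd_re z))).
have Hz' : cd_re z' = 0 by rewrite /z' ?reE; ring.
have E := decompIm Hz'.
have -> : cdlc J (fun j => cd_dot z (u j)) u = z'.
  rewrite E; apply: cdlc_eq_in => j Hj.
  by rewrite /z' ?dotE uJ_re // mulr0 subr0.
rewrite /z'; cdring.
Qed.


Definition d j := if j == 1%N then cd_real n 1 else u j.
Definition L1 := iota 1 K.

Lemma L1E : L1 = 1%N :: J.
Proof. by rewrite /L1 /J; have := K_gt0; case: K. Qed.

Lemma memL1 j : (j \in L1) = (1 <= j <= K)%N.
Proof. by rewrite /L1 mem_iota add1n ltnS. Qed.

Lemma memL1_cases j : j \in L1 -> j = 1%N \/ j \in J.
Proof. by rewrite L1E in_cons => /orP [/eqP ->|]; [left|right]. Qed.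

Lemma dJ j : j \in J -> d j = u j.
Proof. by rewrite memJ /d; case: j => [|[|j]]. Qed.

Lemma d_re j : j \in L1 -> cd_re (d j) = (j == 1%N)%:R.
Proof.
case/memL1_cases => [->|Hj]; first by rewrite /d /= cd_re_real.
rewrite dJ // uJ_re //; move: Hj; rewrite memJ; by case: j => [|[|j]].
Qed.

Lemma d_dot i j : i \in L1 -> j \in L1 -> cd_dot (d i) (d j) = (i == j)%:R.
Proof.
case/memL1_cases => [->|Hi]; case/memL1_cases => [->|Hj].
- by rewrite /d /= cd_dot_reall cd_re_real mulr1.
- rewrite /d /= cd_dot_reall mul1r -/(d j) d_re ?L1E ?in_cons ?Hj ?orbT //.
  by rewrite eq_sym.
- rewrite /d /= cd_dot_realr mul1r -/(d i) d_re ?L1E ?in_cons ?Hi ?orbT //.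
- by rewrite !dJ // uJ_dot.
Qed.

Lemma ebasis_pos j : (1 <= j)%N -> ebasis u (Posz j) = (0, 0, cd_scale 2 (d j)).
Proof.
case: j => [|[|j]] // _.
  by apply: heq => //=; rewrite /d /=; cdring.
Qed.

Lemma decompL1 z : z = cdlc L1 (fun j => cd_dot z (d j)) d.
Proof.
rewrite L1E /= {1}(decomp z); rewrite /d /= cd_dot_realr mul1r.
have -> : cdlc J (fun j => cd_dot z (if j == 1%N then cd_real n 1 else u j))
              (fun j => if j == 1%N then cd_real n 1 else u j) =
          cdlc J (fun j => cd_dot z (u j)) u.
  apply: cdlc_eq_in => j Hj; rewrite -/(d j) dJ //.
cdring.
Qed.

Lemma hlc_eq_in l c e e' : (forall j, j \in l -> e j = e' j) -> hlc l c e = hlc l c e'.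
Proof.
elim: l => [|j l IH] //= H; rewrite H ?mem_head // IH // => k Hk.
by apply: H; rewrite in_cons Hk orbT.
Qed.

Lemma hlc_ebasis c : hlc L1 c (fun j => ebasis u (Posz j)) =
  (0, 0, cdlc L1 (fun j => 2 * c j) d).
Proof.
rewrite (@hlc_eq_in _ _ _ (fun j => (0, 0, cd_scale 2 (d j)))); last first.
  by move=> j; rewrite memL1 => /andP [Hj _]; rewrite ebasis_pos.
rewrite hlcE /=; apply: heq => /=.
- by rewrite big1 // => j _; rewrite mulr0.
- by rewrite big1 // => j _; rewrite mulr0.
- by apply: cdlc_eq_in => j _; cdring.
Qed.

Lemma hdecomp p : p = hadd (hscale (p.1.1 / 2) (ebasis u (-1)))
  (hadd (hscale (p.1.2 / 2) (ebasis u 0))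
        (hlc L1 (fun j => cd_dot p.2 (d j) / 2) (fun j => ebasis u (Posz j)))).
Proof.
rewrite hlc_ebasis; case: p => [[t x] z] /=.
have -> : cdlc L1 (fun j => 2 * (cd_dot z (d j) / 2)) d = cdlc L1 (fun j => cd_dot z (d j)) d.
  by apply: cdlc_eq_in => j _; congr cd_scale; field.
rewrite -decompL1; apply: heq => /=; [by field | by field | cdring].
Qed.

Lemma in_range_pos j : (j <= K)%N -> in_range n (Posz j).
Proof. by move=> Hj; rewrite /in_range lez_nat Hj andbT. Qed.

Lemma in_range_m1 : in_range n (-1).
Proof. by rewrite /in_range lexx /= (@le_trans _ _ 0) // lez_nat. Qed.

Lemma determ f g : rlinear f -> rlinear g ->
  (forall i, in_range n i -> f (ebasis u i) = g (ebasis u i)) -> forall p, f p = g p.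
Proof.
move=> Hf Hg H p; rewrite (hdecomp p) !(rlinD Hf, rlinD Hg, rlinZ Hf, rlinZ Hg, rlin_hlc _ _ _ Hf, rlin_hlc _ _ _ Hg).
rewrite H ?in_range_m1 // H ?in_range_pos //.
congr hadd; congr hadd; apply: hlc_eq_in => j; rewrite memL1 => /andP [_ Hj].
by rewrite H // in_range_pos.
Qed.

Lemma range_cases i : in_range n i -> i = -1 \/ exists l, (l <= K)%N /\ i = Posz l.
Proof.
case: i => [l|l]; rewrite /in_range.
  by move=> /andP [_ H]; right; exists l; split => //; rewrite -lez_nat.
move=> /andP [H _]; left; move: H; rewrite NegzE lerN2 lez_nat.
by case: l.
Qed.



Lemma Gf_e_m1 a w v y : Gf a w v y (ebasis u (-1)) = (0, 2 * a, cd_scale 2 w).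
Proof. rewrite /Gf /A1z /=; apply: heq => /=; rewrite ?dotE ?reE; [ring|ring|cdring]. Qed.

Lemma Gf_e_0 a w v y : Gf a w v y (ebasis u 0) = (2 * a, 0, cd_scale 2 v).
Proof. rewrite /Gf /A1z /=; apply: heq => /=; rewrite ?dotE ?reE; [ring|ring|cdring]. Qed.

Lemma Gf_e_pos a w v y l : (1 <= l)%N -> Gf a w v y (ebasis u (Posz l)) =
  (2 * cd_dot w (d l), - (2 * cd_dot v (d l)),
   cd_add (cd_scale (2 * cd_re (d l)) y) (cd_opp (cd_real n (2 * cd_dot y (d l))))).
Proof.
move=> Hl; rewrite ebasis_pos // /Gf /A1z /=.
apply: heq => /=; rewrite ?dotE ?reE; [ring|ring|cdring].
Qed.


Ltac fin := apply: heq => /=; rewrite ?dotE ?reE; [ring|ring|cdring].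

Lemma spec_B0 i : in_range n i ->
  Gf 1 (cd_zero R n) (cd_zero R n) (cd_zero R n) (ebasis u i) =
  if i == -1 then ebasis u 0 else if i == 0 then ebasis u (-1) else hzero R n.
Proof.
move=> /range_cases [-> | [l [Hl ->]]].
  by rewrite Gf_e_m1; fin.
case: l Hl => [|l] Hl; first by rewrite Gf_e_0; fin.
by rewrite Gf_e_pos //; fin.
Qed.

Lemma spec_Bj j : (1 <= j <= K)%N -> forall i, in_range n i ->
  Gf 0 (d j) (cd_zero R n) (cd_zero R n) (ebasis u i) =
  if i == -1 then ebasis u (Posz j) else if i == Posz j then ebasis u (-1) else hzero R n.
Proof.
move=> Hj i /range_cases [-> | [l [Hl ->]]].
  rewrite Gf_e_m1 ebasis_pos; [fin | by case/andP: Hj].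
case: l Hl => [|l] Hl.
  rewrite Gf_e_0 /=; case: eqP => [E|_]; [by move: Hj; injection E => <- | fin].
rewrite Gf_e_pos // d_dot ?memL1 ?Hj //=.
case: (eqVneq j l.+1) => [E|NE].
  by subst j; rewrite eqxx; fin.
by rewrite eqz_nat eq_sym (negPf NE); fin.
Qed.

Lemma spec_A0 j : (1 <= j <= K)%N -> forall i, in_range n i ->
  Gf 0 (cd_zero R n) (d j) (cd_zero R n) (ebasis u i) =
  if i == 0 then ebasis u (Posz j) else if i == Posz j then hopp (ebasis u 0) else hzero R n.
Proof.
move=> Hj i /range_cases [-> | [l [Hl ->]]].
  by rewrite Gf_e_m1; fin.
case: l Hl => [|l] Hl.
  rewrite Gf_e_0 ebasis_pos; [fin | by case/andP: Hj].
rewrite Gf_e_pos // d_dot ?memL1 ?Hj //=.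
case: (eqVneq j l.+1) => [E|NE].
  by subst j; rewrite eqxx; fin.
by rewrite eqz_nat eq_sym (negPf NE); fin.
Qed.

Lemma spec_A1 j : (2 <= j <= K)%N -> forall i, in_range n i ->
  Gf 0 (cd_zero R n) (cd_zero R n) (u j) (ebasis u i) =
  if i == 1 then ebasis u (Posz j) else if i == Posz j then hopp (ebasis u 1) else hzero R n.
Proof.
move=> Hj i; have HjJ : j \in J by rewrite memJ.
have HjL : j \in L1 by rewrite L1E in_cons HjJ orbT.
move=> /range_cases [-> | [l [Hl ->]]].
  by rewrite Gf_e_m1; fin.
case: l Hl => [|l] Hl.
  have -> : (0 == Posz j) = false by case: j Hj {HjJ HjL}.
  by rewrite Gf_e_0; fin.
have HlL : l.+1 \in L1 by rewrite memL1.
rewrite Gf_e_pos // -(dJ HjJ) (d_dot HjL HlL) (d_re HlL).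
case: l Hl HlL => [|l] Hl HlL.
  have Hj1 : (j == 1)%N = false by case: j Hj {HjJ HjL}=> [|[|j]].
  rewrite Hj1 ebasis_pos; last by case: j Hj {HjJ HjL Hj1} => [|[|j]].
  by fin.
case: (eqVneq j l.+2) => [E|NE].
  by subst j; rewrite /= eqxx; fin.
have -> : (l.+2 == j :> int) = false by rewrite eqz_nat eq_sym (negPf NE).
by fin.
Qed.

End U.



Section Span.
Variable R : realType.
Variable n : nat.
Implicit Types (p q : h2 R n) (f g : endo R n) (a : R) (w v y z : CD R n).

Fixpoint allS (S : endo R n -> Prop) (l : seq (R * endo R n)) : Prop :=
  match l with [::] => True | cg :: l' => S cg.2 /\ allS S l' end.

Definition lsum (l : seq (R * endo R n)) p : h2 R n :=
  foldr (fun cg acc => hadd (hscale cg.1 (cg.2 p)) acc) (hzero R n) l.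

Lemma allS_cat S l1 l2 : allS S l1 -> allS S l2 -> allS S (l1 ++ l2).
Proof. by elim: l1 => [|x l1 IH] //= [H1 H2] H; split => //; apply: IH. Qed.


Lemma allS_map (S : endo R n -> Prop) (c : nat -> R) (g : nat -> endo R n) (s : seq nat) :
  (forall i, i \in s -> S (g i)) -> allS S (map (fun i => (c i, g i)) s).
Proof.
elim: s => [|i s IH] //= H; split; first by apply: H; rewrite mem_head.
by apply: IH => j Hj; apply: H; rewrite in_cons Hj orbT.
Qed.

Lemma allS_nth S l i : allS S l -> (i < size l)%N -> S (nth (0, @ezero R n) l i).2.
Proof.
elim: l i => [|x l IH] [|i] //= [H1 H2] Hi; [exact: H1 | exact: IH].
Qed.

Lemma lsum_cat l1 l2 p : lsum (l1 ++ l2) p = hadd (lsum l1 p) (lsum l2 p).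
Proof.
elim: l1 => [|x l1 IH] /=; first by hring.
rewrite -/(lsum (l1 ++ l2) p) IH -/(lsum l1 p); hring.
Qed.

Lemma lsum_map (T : Type) (F : T -> (R * endo R n)) (s : seq T) p :
  lsum (map F s) p = foldr (fun j acc => hadd (hscale (F j).1 ((F j).2 p)) acc) (hzero R n) s.
Proof. by elim: s => //= j s ->. Qed.

Lemma in_spanP S f : in_span S f <-> exists l, allS S l /\ forall p, f p = lsum l p.
Proof.
split.
  case=> [m [c [g [HS E]]]]; exists (map (fun i => (c i, g i)) (enum 'I_m)); split.
    elim: (enum 'I_m) => //= i s IH; split => //; exact: HS.
  by move=> p; rewrite E lsum_map.
case=> [l [HS E]].
exists (size l), (fun i => (nth (0, @ezero R n) l i).1), (fun i => (nth (0, @ezero R n) l i).2).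
split; first by move=> i; apply: allS_nth.
move=> p; rewrite E.
have -> : forall s : seq 'I_(size l),
  foldr (fun (i : 'I_(size l)) acc => hadd (hscale (nth (0, @ezero R n) l i).1 ((nth (0, @ezero R n) l i).2 p)) acc)
        (hzero R n) s =
  lsum (map (nth (0, @ezero R n) l) (map val s)) p.
  by elim=> //= i s ->.
by rewrite val_enum_ord -/(mkseq _ _) mkseq_nth.
Qed.

Lemma lsum_Gset l : allS (@Gset R n) l -> Gset (lsum l).
Proof.
elim: l => [|[c g] l IH] /=.
  by move=> _; exists 0, (cd_zero R n), (cd_zero R n), (cd_zero R n) => p; rewrite Gf_zero.
case=> [[a [w [v [y Eg]]]] Hl]; case: (IH Hl) => a' [w' [v' [y' E]]].
eexists; eexists; eexists; eexists => p.
by rewrite /= Eg -/(lsum l p) E Gf_params.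
Qed.

Lemma hlc_Gf s (c : nat -> R) A W V Y p :
  hlc s c (fun j => Gf (A j) (W j) (V j) (Y j) p) =
  Gf (\sum_(j <- s) c j * A j) (cdlc s c W) (cdlc s c V) (cdlc s c Y) p.
Proof.
elim: s => [|j s IH] /=; first by rewrite big_nil Gf_zero.
by rewrite IH Gf_params big_cons.
Qed.

Lemma cdlc_zero s (c : nat -> R) : cdlc s c (fun _ => cd_zero R n) = cd_zero R n.
Proof.
apply: cd_ext => i; rewrite cdc_cdlc cdc_zero big1 // => j _; by rewrite mulr0.
Qed.

Lemma lsum_mapE (c : nat -> R) (g : nat -> endo R n) s p :
  lsum (map (fun j => (c j, g j)) s) p = hlc s c (fun j => g j p).
Proof. by elim: s => //= j s ->. Qed.

Variable u : nat -> CD R n.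
Variable hu : orthonormal_basis_Im u.

Lemma gen_Gset f : boost_rot_gens u f -> Gset f.
Proof.
case=> [[j [Hj [Lf Sf]]] | [[j [Hj [Lf Sf]]] | [j [Hj [Lf Sf]]]]].
- case: j Hj Sf => [j|j] Hj Sf; last by case/andP: Hj.
  case: j Hj Sf => [|j] Hj Sf.
    exists 1, (cd_zero R n), (cd_zero R n), (cd_zero R n).
    apply: (determ hu Lf (Gf_lin _ _ _ _)) => i Hi.
    by rewrite Sf // spec_B0.
  exists 0, (d u j.+1), (cd_zero R n), (cd_zero R n).
  apply: (determ hu Lf (Gf_lin _ _ _ _)) => i Hi.
  by rewrite Sf // spec_Bj //; move: Hj; rewrite lez_nat.
- case: j Hj Sf => [j|j] Hj Sf; last by case/andP: Hj.
  exists 0, (cd_zero R n), (d u j), (cd_zero R n).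
  apply: (determ hu Lf (Gf_lin _ _ _ _)) => i Hi.
  by rewrite Sf // spec_A0 //; move: Hj; rewrite lez_nat.
- case: j Hj Sf => [j|j] Hj Sf; last by case/andP: Hj.
  exists 0, (cd_zero R n), (cd_zero R n), (u j).
  apply: (determ hu Lf (Gf_lin _ _ _ _)) => i Hi.
  by rewrite Sf // spec_A1 //; move: Hj; rewrite lez_nat.
Qed.


Lemma Gf_Im a w v y p : Gf a w v y p = Gf a w v (cdlc (J n) (fun j => cd_dot y (u j)) u) p.
Proof.
have E := decomp hu y.
set Y := cdlc _ _ _ in E *.
rewrite {1}E /Gf /A1z; apply: heq => //=; rewrite ?dotE ?reE; cdring.
Qed.

Lemma Gset_span f : Gset f -> in_span (boost_rot_gens u) f.
Proof.
case=> [a [w [v [y E]]]]; apply/in_spanP.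
exists ((a, Gf 1 (cd_zero R n) (cd_zero R n) (cd_zero R n)) ::
   map (fun j => (cd_dot w (d u j), Gf 0 (d u j) (cd_zero R n) (cd_zero R n))) (L1 n)
   ++ map (fun j => (cd_dot v (d u j), Gf 0 (cd_zero R n) (d u j) (cd_zero R n))) (L1 n)
   ++ map (fun j => (cd_dot y (u j), Gf 0 (cd_zero R n) (cd_zero R n) (u j))) (J n)); split.
  split.
    left; exists 0; split; first by [].
    by split; [exact: Gf_lin | move=> i Hi; exact: spec_B0].
  apply: allS_cat; [|apply: allS_cat]; apply: allS_map => j Hj.
  - left; exists (Posz j); rewrite memL1 in Hj; split.
      by apply/andP; split; [by [] | rewrite lez_nat; case/andP: Hj].
    by split; [exact: Gf_lin | move=> i Hi; exact: (spec_Bj hu)].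
  - right; left; exists (Posz j); rewrite memL1 in Hj; split; first exact Hj.
    by split; [exact: Gf_lin | move=> i Hi; exact: (spec_A0 hu)].
  - right; right; exists (Posz j); rewrite memJ in Hj; split; first exact Hj.
    by split; [exact: Gf_lin | move=> i Hi; exact: (spec_A1 hu)].
move=> p; rewrite E /= -/(lsum _ p) !lsum_cat !lsum_mapE !hlc_Gf !cdlc_zero.
rewrite !big1 => [|j _|j _|j _]; rewrite ?mulr0 //.
rewrite -!decompL1 // -Gf_Im /Gf /A1z; apply: heq => /=; rewrite ?dotE ?reE; [ring|ring|cdring].
Qed.

Lemma part1 (hn : (n <= 3)%N) f : rho_set f <-> in_span (boost_rot_gens u) f.
Proof.
rewrite rho_Gset //; split; first exact: Gset_span.
move=> /in_spanP [l [Hl E]].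
have : allS (@Gset R n) l.
  elim: l Hl {E} => //= [[c g] l] IH /= [H1 H2]; split; [exact: gen_Gset | exact: IH].
move/lsum_Gset => [a [w [v [y E']]]]; exists a, w, v, y => p; by rewrite E E'.
Qed.

End Span.



Section Lie.
Variable R : realType.
Variable n : nat.
Implicit Types (p q : h2 R n) (f g : endo R n) (a : R) (w v y z : CD R n).

Definition et : h2 R n := (1, 0, cd_zero R n).
Definition ex : h2 R n := (0, 1, cd_zero R n).
Definition e1 : h2 R n := (0, 0, cd_real n 1).
Definition ez z : h2 R n := (0, 0, z).

Lemma Rot_eq y y' p : cd_re y = 0 -> cd_re y' = 0 ->
  bracket (Gf 0 (cd_zero R n) (cd_zero R n) y) (Gf 0 (cd_zero R n) (cd_zero R n) y') p =
  (0, 0, cd_add (cd_scale (cd_dot y p.2) y') (cd_opp (cd_scale (cd_dot y' p.2) y))).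
Proof.
move=> Hy Hy'; case: p => [[t x] z].
rewrite /bracket /Gf /A1z /hadd /hopp; apply: heq => /=; rewrite ?dotE ?reE ?Hy ?Hy'.
- ring.
- ring.
- rewrite (cd_dotC y' y); cdring.
Qed.

Variable u : nat -> CD R n.
Variable hu : orthonormal_basis_Im u.

Lemma pdecomp p : p = hadd (hscale p.1.1 et) (hadd (hscale p.1.2 ex)
  (hadd (hscale (cd_re p.2) e1) (hlc (J n) (fun i => cd_dot p.2 (u i)) (fun i => ez (u i))))).
Proof.
rewrite hlcE /= big1 => [|i _]; last by rewrite mulr0.
case: p => [[t x] z]; apply: heq => /=; [ring|ring|].
rewrite {1}(decomp hu z); cdring.
Qed.

Section G.
Variable g : endo R n.
Hypothesis gso : so_q g.
Hypothesis gt : g et = hzero R n.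
Hypothesis gx : g ex = hzero R n.
Hypothesis g1 : g e1 = hzero R n.

Lemma g_t q : (g q).1.1 = 0.
Proof. have := gso.2 q et; rewrite gt !qpolarE /= ?dotE; lra. Qed.
Lemma g_x q : (g q).1.2 = 0.
Proof. have := gso.2 q ex; rewrite gx !qpolarE /= ?dotE; lra. Qed.
Lemma g_re q : cd_re (g q).2 = 0.
Proof. have := gso.2 q e1; rewrite g1 !qpolarE /= ?dotE; lra. Qed.

Definition gi i := (g (ez (u i))).2.
Definition W z := cdlc (J n) (fun i => cd_dot z (u i)) gi.

Lemma g_decomp p : g p = (0, 0, W p.2).
Proof.
rewrite {1}(pdecomp p) !(rlinD gso.1, rlinZ gso.1) gt gx g1 rlin_hlc; last exact: gso.1.
rewrite hlcE; apply: heq => /=.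
- rewrite big1 => [|i _]; last by rewrite g_t mulr0.
  ring.
- rewrite big1 => [|i _]; last by rewrite g_x mulr0.
  ring.
- rewrite /W; cdring.
Qed.

Lemma gi_dot i z : cd_dot (gi i) z = - cd_dot (u i) (W z).
Proof.
have := gso.2 (ez (u i)) (ez z); rewrite (g_decomp (ez z)) !qpolarE /= -/(gi i) g_t g_x.
lra.
Qed.

Lemma W_re z : cd_re (W z) = 0.
Proof. by have := g_re (ez z); rewrite g_decomp. Qed.

Lemma W_rot z : W z = cdlc (J n) (fun _ => 1/2)
  (fun i => cd_add (cd_scale (cd_dot (u i) z) (gi i)) (cd_opp (cd_scale (cd_dot (gi i) z) (u i)))).
Proof.
apply: cd_ext => k; rewrite cdc_cdlc.
under eq_bigr => i _ do rewrite cdc_add cdc_opp !cdc_scale gi_dot.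
have E1 : cdc (W z) k = \sum_(i <- J n) cd_dot (u i) z * cdc (gi i) k.
  by rewrite /W cdc_cdlc; apply: eq_bigr => i _; rewrite cd_dotC.
have E2 : cdc (W z) k = \sum_(i <- J n) cd_dot (W z) (u i) * cdc (u i) k.
  by rewrite {1}(decompIm hu (W_re z)) cdc_cdlc.
transitivity (1/2 * (\sum_(i <- J n) cd_dot (u i) z * cdc (gi i) k) +
              1/2 * (\sum_(i <- J n) cd_dot (W z) (u i) * cdc (u i) k)).
  by rewrite -E1 -E2; field.
rewrite !mulr_sumr -big_split /=; apply: eq_bigr => i _; rewrite (cd_dotC (W z)); ring.
Qed.

End G.

End Lie.



Lemma part2 (R : realType) (n : nat) (hn : (n <= 3)%N) (u : nat -> CD R n)
  (hu : orthonormal_basis_Im u) (f : endo R n) :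
  lie_gen (@rho_set R n) f <-> so_q f.
Proof.
split.
  move=> H; apply: H; first exact: so_q_lie.
  by move=> g /(rho_Gset hn) /Gset_so.
move=> Hf L HL HS.
have LG : forall a w v y, L (Gf a w v y).
  move=> a w v y; apply: HS; apply/(rho_Gset hn).
  by exists a, w, v, y.
case: HL => [_ [L0 [LD [LZ LB]]]].
case: (so_q_lie R n) => [_ [_ [SD [SZ _]]]].
pose G := Gf (f (et R n)).1.2 (f (et R n)).2 (f (ex R n)).2 (f (e1 R n)).2.
pose g := fun p => hadd (f p) (hopp (G p)).
have gso : so_q g.
  apply: (so_q_ext (g := eadd f (escale (-1) G))); last by apply: SD => //; apply: SZ; exact: Gf_so.
  by move=> p; rewrite /g /eadd /escale; hring.
have Sf := Hf.2.
have S1 := Sf (et R n) (et R n); have S2 := Sf (ex R n) (et R n); have S3 := Sf (ex R n) (ex R n).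
have S4 := Sf (e1 R n) (et R n); have S5 := Sf (e1 R n) (ex R n); have S6 := Sf (e1 R n) (e1 R n).
rewrite !qpolarE /= ?dotE ?reE in S1 S2 S3 S4 S5 S6.
have Hy0 : cd_re (f (e1 R n)).2 = 0.
  by move: S6; lra.
have gt : g (et R n) = hzero R n.
  rewrite /g /G /Gf /A1z; apply: heq => /=; rewrite ?dotE ?reE; [lra|lra|cdring].
have gx : g (ex R n) = hzero R n.
  rewrite /g /G /Gf /A1z; apply: heq => /=; rewrite ?dotE ?reE; [lra|lra|cdring].
have g1 : g (e1 R n) = hzero R n.
  rewrite /g /G /Gf /A1z; apply: heq => /=; rewrite ?dotE ?reE ?Hy0.
  - move: S4; lra.
  - move: S5; lra.
  - cdring.
pose Sum := foldr (fun i acc => eadd (escale (1/2)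
   (bracket (Gf 0 (cd_zero R n) (cd_zero R n) (u i))
            (Gf 0 (cd_zero R n) (cd_zero R n) (gi u g i)))) acc) (@ezero R n) (J n).
have LSum : L Sum.
  rewrite /Sum; elim: (J n) => //= i s IH.
  by apply: LD => //; apply: LZ; apply: LB; apply: LG.
have -> : f = eadd G Sum; last by apply: LD => //; apply: LG.
apply: functional_extensionality => p.
have Ep : f p = hadd (G p) (g p) by rewrite /g; hring.
rewrite Ep /eadd; congr hadd.
have -> : Sum p = hlc (J n) (fun _ => 1/2) (fun i =>
   bracket (Gf 0 (cd_zero R n) (cd_zero R n) (u i))
           (Gf 0 (cd_zero R n) (cd_zero R n) (gi u g i)) p).
  by rewrite /Sum; elim: (J n) => [//|i s IH] /=; rewrite -IH.
rewrite (@hlc_eq_in R n (J n) (fun _ => 1/2) _ (fun i => (0, 0, cd_add (cd_scale (cd_dot (u i) p.2) (gi u g i))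
     (cd_opp (cd_scale (cd_dot (gi u g i) p.2) (u i)))))); last first.
  move=> i Hi; apply: Rot_eq; first exact: (uJ_re hu).
  exact: (g_re gso g1).
rewrite hlcE /= (g_decomp hu gso gt gx g1) (W_rot hu gso gt gx g1).
apply: heq => /=; rewrite ?big1 // => i _; rewrite mulr0 //.
Qed.

Theorem mainTheorem7 (R : realType) (n : nat) (hn : (n <= 3)%N)
  (u : nat -> CD R n) (hu : orthonormal_basis_Im u) :
  (forall f : endo R n, rho_set f <-> in_span (boost_rot_gens u) f) /\
  (forall f : endo R n, lie_gen (@rho_set R n) f <-> so_q f).
Proof.
split => f; [exact: (part1 hu hn) | exact: (part2 hn hu)].
Qed.
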